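(* Let $(Q,\cdot)$ be a quasigroup satisfying $(xx)(yz)=(x(xy))z$ for all $x,y,z\in Q$ (an LC1-quasigroup). Then $Q$ satisfies $x(y(yz))=(x(yy))z$ for all $x,y,z\in Q$ (i.e. $Q$ is an LC4-quasigroup).
   Context: A quasigroup is a set $Q$ with a binary operation $\cdot$ (written as juxtaposition) such that for all $a,b\in Q$ each of the equations $ax=b$ and $ya=b$ has a unique solution in $Q$. *)

(* Defs.v *)
Definition is_quasigroup (Q : Type) (mul : Q -> Q -> Q) : Prop :=
  forall a b : Q,
    (exists! x : Q, mul a x = b) /\ (exists! y : Q, mul y a = b).

Definition LC1 (Q : Type) (mul : Q -> Q -> Q) : Prop :=
  forall x y z : Q, mul (mul x x) (mul y z) = mul (mul x (mul x y)) z.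

Definition LC4 (Q : Type) (mul : Q -> Q -> Q) : Prop :=
  forall x y z : Q, mul x (mul y (mul y z)) = mul (mul x (mul y y)) z.

(* Main.v *)
Require Import Defs.

Theorem mainTheorem9 (Q : Type) (mul : Q -> Q -> Q)
  (hQ : is_quasigroup Q mul) (h1 : LC1 Q mul) : LC4 Q mul.
Proof.
  unfold LC1 in h1. unfold LC4.
  assert (lc : forall a x y, mul a x = mul a y -> x = y).
  { intros a x y H. destruct (proj1 (hQ a (mul a x))) as [w [_ U]].
    rewrite <- (U x eq_refl). apply U. now symmetry. }
  assert (rc : forall a x y, mul x a = mul y a -> x = y).
  { intros a x y H. destruct (proj2 (hQ a (mul x a))) as [w [_ U]].
    rewrite <- (U x eq_refl). apply U. now symmetry. }
  assert (rd : forall a b, exists x, mul a x = b).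
  { intros a b. destruct (proj1 (hQ a b)) as [w [H _]]. eauto. }
  intros x0 y0 z0.
  destruct (rd x0 x0) as [e He].
  assert (Le : forall z, mul e z = z).
  { intros z. apply (lc (mul x0 x0)). rewrite h1, He. reflexivity. }
  assert (Re : forall w, mul w e = w).
  { intros w. destruct (rd w w) as [f Hf].
    assert (Lf : forall z, mul f z = z).
    { intros z. apply (lc (mul w w)). rewrite h1, Hf. reflexivity. }
    assert (f = e). { apply (rc e). rewrite Lf, Le. reflexivity. }
    subst f. exact Hf. }
  assert (S2 : forall x y, mul (mul x x) y = mul x (mul x y)).
  { intros x y. pose proof (h1 x y e) as H. rewrite !Re in H. exact H. }
  assert (NL : forall x y z, mul (mul x x) (mul y z) = mul (mul (mul x x) y) z).
  { intros x y z. rewrite h1, S2. reflexivity. }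
  assert (LIP : forall a a' w, mul a a' = e -> mul a' (mul a w) = w).
  { intros a a' w H. apply (lc (mul a a)).
    rewrite NL, S2, H, Re, S2. reflexivity. }
  assert (TS : forall a a', mul a a' = e -> mul a' a = e).
  { intros a a' H. pose proof (LIP a a' e H) as H'. rewrite Re in H'. exact H'. }
  destruct (rd x0 e) as [x' Hx]. destruct (rd y0 e) as [y' Hy].
  set (s := mul y0 y0). set (u := mul y' y').
  assert (us : mul u s = e).
  { unfold u, s. rewrite S2, (LIP y0 y' y0 Hy). apply TS; exact Hy. }
  set (p := mul u x').
  assert (pe : mul p (mul x0 s) = e).
  { unfold p, u. rewrite <- NL. fold u. rewrite (LIP x0 x' s Hx). exact us. }
  rewrite <- S2. fold s.
  apply (lc p).
  rewrite (LIP (mul x0 s) p z0) by (apply TS; exact pe).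
  unfold p, u. rewrite <- NL. fold u. rewrite (LIP x0 x' (mul s z0) Hx).
  unfold u. rewrite NL. fold u. rewrite us. apply Le.
Qed.
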